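(* If $Q=ABA'B'$ is a quadrilateral in $K^2$, possibly improper, then the pairs of opposite sides of $Q$ ($A,A'$ and $B,B'$) are $Q$-orthogonal, and the two diagonals of $Q$ are $Q$-orthogonal.
   Context: $K$ is a field of characteristic $\neq 2$. Every line $L$ in $K^2$ has an equation $tX-uY+v=0$ normalized so that $t=1$ if $u=0$ and $u=1$ if $u\neq 0$; coefficients denoted $t_L,u_L,v_L$. A quadrilateral $Q=ABA'B'$ consists of four distinct lines $A,B,A',B'$ (sides), not all through one point, with adjacent sides ($A,B$; $B,A'$; $A',B'$; $B',A$) not parallel; opposite sides may be parallel. Vertices: $A\cap B$, $B\cap A'$, $A'\cap B'$, $B'\cap A$; three sides may be concurrent, in which case two vertices coincide and $Q$ is improper. The diagonals are the line through $A\cap B$ and $A'\cap B'$ and the line through $B\cap A'$ and $B'\cap A$ (the lines through nonadjacent vertices). Let $\alpha=t_Au_Bu_{A'}u_{B'}-u_At_Bu_{A'}u_{B'}+u_Au_Bt_{A'}u_{B'}-u_Au_Bu_{A'}t_{B'}$, $\beta=t_Au_Bt_{A'}u_{B'}-u_At_Bu_{A'}t_{B'}$, $\gamma=t_At_Bt_{A'}u_{B'}-t_At_Bu_{A'}t_{B'}+t_Au_Bt_{A'}t_{B'}-u_At_Bt_{A'}t_{B'}$, and $\langle \mathbf v,\mathbf w\rangle_Q=\mathbf v^T\begin{pmatrix}\gamma&-\beta\\-\beta&\alpha\end{pmatrix}\mathbf w$. Lines $\ell_1,\ell_2$ are $Q$-orthogonal if $\langle (u_{\ell_1},t_{\ell_1}),(u_{\ell_2},t_{\ell_2})\rangle_Q=0$.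 *)

(* Defs.v *)
From HB Require Import structures.
From mathcomp Require Import all_boot all_order all_algebra.
Set Implicit Arguments. Unset Strict Implicit. Unset Printing Implicit Defensive.
Import GRing.Theory.
Local Open Scope ring_scope.

(* A line of K^2, given by its normalized equation  t X - u Y + v = 0 :
   t = 1 if u = 0, and u = 1 if u <> 0. *)
Record line (K : fieldType) := Line {
  t_ : K; u_ : K; v_ : K;
  line_normalized : ((u_ == 0) && (t_ == 1)) || (u_ == 1) }.

Definition on_line (K : fieldType) (L : line K) (p : K * K) : Prop :=
  t_ L * p.1 - u_ L * p.2 + v_ L = 0.

Definition parallel (K : fieldType) (L M : line K) : Prop :=
  L = M \/ ~ (exists p, on_line L p /\ on_line M p).

Definition is_quadrilateral (K : fieldType) (A B A' B' : line K) : Prop :=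
  (A <> B /\ A <> A' /\ A <> B' /\ B <> A' /\ B <> B' /\ A' <> B') /\
  ~ (exists p, [/\ on_line A p, on_line B p, on_line A' p & on_line B' p]) /\
  [/\ ~ parallel A B, ~ parallel B A', ~ parallel A' B' & ~ parallel B' A].

Definition qalpha (K : fieldType) (A B A' B' : line K) : K :=
  t_ A * u_ B * u_ A' * u_ B' - u_ A * t_ B * u_ A' * u_ B'
  + u_ A * u_ B * t_ A' * u_ B' - u_ A * u_ B * u_ A' * t_ B'.

Definition qbeta (K : fieldType) (A B A' B' : line K) : K :=
  t_ A * u_ B * t_ A' * u_ B' - u_ A * t_ B * u_ A' * t_ B'.

Definition qgamma (K : fieldType) (A B A' B' : line K) : K :=
  t_ A * t_ B * t_ A' * u_ B' - t_ A * t_ B * u_ A' * t_ B'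
  + t_ A * u_ B * t_ A' * t_ B' - u_ A * t_ B * t_ A' * t_ B'.

Definition qform (K : fieldType) (A B A' B' : line K) (v w : K * K) : K :=
  v.1 * (qgamma A B A' B' * w.1 - qbeta A B A' B' * w.2)
  + v.2 * (- qbeta A B A' B' * w.1 + qalpha A B A' B' * w.2).

Definition Q_orthogonal (K : fieldType) (A B A' B' : line K) (l1 l2 : line K)
  : Prop :=
  qform A B A' B' (u_ l1, t_ l1) (u_ l2, t_ l2) = 0.

(* Main.v *)
Require Import Defs.
From HB Require Import structures.
From mathcomp Require Import all_boot all_order all_algebra.
From mathcomp Require Import ring.
Import GRing.Theory.
Set Implicit Arguments. Unset Strict Implicit.
Local Open Scope ring_scope.

Section Aux.
Variable K : fieldType.

Definition det (L M : line K) : K := t_ L * u_ M - t_ M * u_ L.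

Lemma cramer (L M : line K) (p : K * K) : on_line L p -> on_line M p ->
  det L M * p.1 = v_ M * u_ L - v_ L * u_ M /\
  det L M * p.2 = t_ L * v_ M - v_ L * t_ M.
Proof.
rewrite /on_line /det => eL eM; split.
  apply/eqP; rewrite -subr_eq0; apply/eqP.
  transitivity (u_ M * (t_ L * p.1 - u_ L * p.2 + v_ L)
               - u_ L * (t_ M * p.1 - u_ M * p.2 + v_ M)); first by ring.
  by rewrite eL eM; ring.
apply/eqP; rewrite -subr_eq0; apply/eqP.
transitivity (t_ M * (t_ L * p.1 - u_ L * p.2 + v_ L)
             - t_ L * (t_ M * p.1 - u_ M * p.2 + v_ M)); first by ring.
by rewrite eL eM; ring.
Qed.

Lemma line_eq (L M : line K) : t_ L = t_ M -> u_ L = u_ M -> v_ L = v_ M -> L = M.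
Proof.
case: L => t1 u1 v1 n1; case: M => t2 u2 v2 n2 /= e1 e2 e3.
subst; congr Line; exact: bool_irrelevance.
Qed.

Lemma det_neq0 (L M : line K) : ~ parallel L M -> det L M != 0.
Proof.
move=> np; apply/eqP => hd; apply: (np); right => -[p [hL hM]]; apply: np; left.
have Htu : t_ L = t_ M /\ u_ L = u_ M.
  move: hd; rewrite /det.
  case: L hL => t1 u1 v1 n1 _; case: M hM => t2 u2 v2 n2 _ /=.
  move: n1 n2 => /orP [/andP [/eqP -> /eqP ->] | /eqP ->]
                 /orP [/andP [/eqP -> /eqP ->] | /eqP ->].
  - by [].
  - by rewrite mulr1 mulr0 subr0 => /eqP; rewrite oner_eq0.
  - by rewrite mulr0 mulr1 sub0r => /eqP; rewrite oppr_eq0 oner_eq0.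
  - by rewrite !mulr1 => /eqP; rewrite subr_eq0 => /eqP ->.
case: Htu => et eu; apply: line_eq => //.
apply/eqP; rewrite -subr_eq0; apply/eqP.
transitivity ((t_ L * p.1 - u_ L * p.2 + v_ L) - (t_ M * p.1 - u_ M * p.2 + v_ M)).
  by rewrite et eu; ring.
by move: hL hM; rewrite /on_line => -> ->; ring.
Qed.

Lemma qform_sym (A B A' B' : line K) v w : qform A B A' B' v w = qform A B A' B' w v.
Proof. rewrite /qform; ring. Qed.

Lemma qform_scale (A B A' B' : line K) a b v1 v2 w1 w2 :
  qform A B A' B' (a * v1, a * v2) (b * w1, b * w2) =
  a * b * qform A B A' B' (v1, v2) (w1, w2).
Proof. rewrite /qform /=; ring. Qed.

Lemma dir_lemma (A B A' B' : line K) (D : line K) (dx dy : K) w :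
  t_ D * dx - u_ D * dy = 0 -> (dx != 0) || (dy != 0) ->
  qform A B A' B' (dx, dy) w = 0 -> qform A B A' B' (u_ D, t_ D) w = 0.
Proof.
move=> hD hnz hq.
have h1 : qform A B A' B' (u_ D, t_ D) w * dx = 0.
  transitivity (qform A B A' B' (u_ D, t_ D) w * dx - u_ D * qform A B A' B' (dx, dy) w).
    by rewrite hq; ring.
  transitivity ((t_ D * dx - u_ D * dy) *
     (- qbeta A B A' B' * w.1 + qalpha A B A' B' * w.2)); first by rewrite /qform /=; ring.
  by rewrite hD mul0r.
have h2 : qform A B A' B' (u_ D, t_ D) w * dy = 0.
  transitivity (qform A B A' B' (u_ D, t_ D) w * dy - t_ D * qform A B A' B' (dx, dy) w).
    by rewrite hq; ring.
  transitivity (- (t_ D * dx - u_ D * dy) *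
     (qgamma A B A' B' * w.1 - qbeta A B A' B' * w.2)); first by rewrite /qform /=; ring.
  by rewrite hD oppr0 mul0r.
move: hnz => /orP [] hnz.
  by move/eqP: h1; rewrite mulf_eq0 (negbTE hnz) orbF => /eqP.
by move/eqP: h2; rewrite mulf_eq0 (negbTE hnz) orbF => /eqP.
Qed.

Lemma diag_key (A B A' B' : line K) (P1 P2 P3 P4 : K * K) :
  on_line A P1 -> on_line B P1 -> on_line B P2 -> on_line A' P2 ->
  on_line A' P3 -> on_line B' P3 -> on_line B' P4 -> on_line A P4 ->
  det A B * det A' B' * (det B A' * det B' A) *
  qform A B A' B' (P3.1 - P1.1, P3.2 - P1.2) (P4.1 - P2.1, P4.2 - P2.2) = 0.
Proof.
move=> h1a h1b h2a h2b h3a h3b h4a h4b.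
have [x1 y1] := cramer h1a h1b.
have [x2 y2] := cramer h2a h2b.
have [x3 y3] := cramer h3a h3b.
have [x4 y4] := cramer h4a h4b.
rewrite -qform_scale.
have -> : det A B * det A' B' * (P3.1 - P1.1) =
  det A B * (det A' B' * P3.1) - det A' B' * (det A B * P1.1) by ring.
have -> : det A B * det A' B' * (P3.2 - P1.2) =
  det A B * (det A' B' * P3.2) - det A' B' * (det A B * P1.2) by ring.
have -> : det B A' * det B' A * (P4.1 - P2.1) =
  det B A' * (det B' A * P4.1) - det B' A * (det B A' * P2.1) by ring.
have -> : det B A' * det B' A * (P4.2 - P2.2) =
  det B A' * (det B' A * P4.2) - det B' A * (det B A' * P2.2) by ring.
rewrite x1 y1 x2 y2 x3 y3 x4 y4.
rewrite /qform /qalpha /qbeta /qgamma /det /=; ring.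
Qed.

End Aux.

Theorem proposition2p5 (K : fieldType) (hK : (2%:R : K) != 0)
  (A B A' B' : line K) :
  is_quadrilateral A B A' B' ->
  [/\ Q_orthogonal A B A' B' A A',
      Q_orthogonal A B A' B' B B' &
      forall (P1 P2 P3 P4 : K * K) (D1 D2 : line K),
        on_line A P1 -> on_line B P1 ->     (* P1 = A /\ B   *)
        on_line B P2 -> on_line A' P2 ->    (* P2 = B /\ A'  *)
        on_line A' P3 -> on_line B' P3 ->   (* P3 = A' /\ B' *)
        on_line B' P4 -> on_line A P4 ->    (* P4 = B' /\ A  *)
        on_line D1 P1 -> on_line D1 P3 ->   (* D1 = diagonal through P1, P3 *)
        on_line D2 P2 -> on_line D2 P4 ->   (* D2 = diagonal through P2, P4 *)
        Q_orthogonal A B A' B' D1 D2].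
Proof.
move=> [_ [nc [pAB pBA' pA'B' pB'A]]]; split.
- rewrite /Q_orthogonal /qform /qalpha /qbeta /qgamma /=; ring.
- rewrite /Q_orthogonal /qform /qalpha /qbeta /qgamma /=; ring.
move=> P1 P2 P3 P4 D1 D2 h1a h1b h2a h2b h3a h3b h4a h4b hd1 hd3 hd2 hd4.
have key := diag_key h1a h1b h2a h2b h3a h3b h4a h4b.
have hq : qform A B A' B' (P3.1 - P1.1, P3.2 - P1.2) (P4.1 - P2.1, P4.2 - P2.2) = 0.
  by move/eqP: key; rewrite !mulf_eq0 !(negbTE (det_neq0 _)) //= => /eqP.
have lineD (D : line K) (P Q : K * K) : on_line D P -> on_line D Q ->
    t_ D * (Q.1 - P.1) - u_ D * (Q.2 - P.2) = 0.
  rewrite /on_line => eP eQ.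
  transitivity ((t_ D * Q.1 - u_ D * Q.2 + v_ D) - (t_ D * P.1 - u_ D * P.2 + v_ D)).
    by ring.
  by rewrite eP eQ subr0.
have nz (P Q : K * K) : P <> Q -> (Q.1 - P.1 != 0) || (Q.2 - P.2 != 0).
  case: P => a b; case: Q => c d /= hne.
  case: eqP => [e1|//] /=; case: eqP => [e2|//]; exfalso; apply: hne.
  by apply/eqP; rewrite xpair_eqE; apply/andP; split; rewrite eq_sym -subr_eq0; apply/eqP.
have n13 : P1 <> P3.
  move=> e; subst P3; apply: nc; exists P1; split => //.
have n24 : P2 <> P4.
  move=> e; subst P4; apply: nc; exists P2; split => //.
have s1 := dir_lemma (lineD _ _ _ hd1 hd3) (nz _ _ n13) hq.
rewrite /Q_orthogonal qform_sym.
apply: (dir_lemma (lineD _ _ _ hd2 hd4) (nz _ _ n24)).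
by rewrite qform_sym.
Qed.
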